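(* Let $(G_n)$ be a sequence of graphs satisfying conditions (1')–(3') below. Then for all sufficiently large $n$, every subset $U\subseteq V$ with $1\le|U|\le\frac{2\overline\lambda^2n}{d^2}$ satisfies $$|N(U)|>\frac{(d-2\overline\lambda)^2}{5\overline\lambda^2}|U|.$$
   Context: $G_n$ has vertex set $V$, $|V|=n$, average degree $d$, minimum degree $\delta$, maximum degree $\Delta$. For $U,W\subseteq V$, $e(U,W)$ is the number of ordered pairs $(u,w)\in U\times W$ with $u$ adjacent to $w$; $N(U)$ is the set of vertices not in $U$ having a neighbor in $U$. A number $\overline\lambda=\overline\lambda(n)>0$ controls the edge distribution of $G_n$ if for all $U,W\subseteq V$: $\left|e(U,W)-\frac{d}{n}|U||W|\right|\le\overline\lambda\sqrt{|U||W|}$. Conditions: there is such $\overline\lambda$ with (1') $\Delta-\delta\le\overline\lambda$; (2') $\frac{d}{\overline\lambda}/\log^2n\to\infty$; (3') $\log d\cdot\log\frac{d}{\overline\lambda}/\log n\to\infty$. *)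

(* Defs.v *)
From HB Require Import structures.
From mathcomp Require Import all_boot all_order all_algebra.
From mathcomp Require Import all_classical all_reals.
From mathcomp Require Import exp.
Set Implicit Arguments. Unset Strict Implicit. Unset Printing Implicit Defensive.
Import Order.TTheory GRing.Theory Num.Theory.
Local Open Scope ring_scope.

Definition simple_graph (n : nat) (e : rel 'I_n) : Prop :=
  symmetric e /\ irreflexive e.

Definition deg (n : nat) (e : rel 'I_n) (v : 'I_n) : nat := #|[set w | e v w]|.

Definition max_deg (n : nat) (e : rel 'I_n) : nat := (\max_(v : 'I_n) deg e v)%N.

(* minimum degree; the seed n is never attained when n > 0 since deg <= n-1 *)
Definition min_deg (n : nat) (e : rel 'I_n) : nat :=
  (\big[minn/n]_(v : 'I_n) deg e v)%N.

Definition avg_deg (R : realType) (n : nat) (e : rel 'I_n) : R :=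
  (\sum_(v : 'I_n) deg e v)%N%:R / n%:R.

Definition e_pairs (n : nat) (e : rel 'I_n) (U W : {set 'I_n}) : nat :=
  #|[set p : 'I_n * 'I_n | [&& p.1 \in U, p.2 \in W & e p.1 p.2]]|.

Definition nbhd (n : nat) (e : rel 'I_n) (U : {set 'I_n}) : {set 'I_n} :=
  [set v | (v \notin U) && [exists u in U, e u v]].

Definition controls (R : realType) (n : nat) (e : rel 'I_n) (lam : R) : Prop :=
  forall U W : {set 'I_n},
    `| (e_pairs e U W)%:R - avg_deg R e / n%:R * #|U|%:R * #|W|%:R |
      <= lam * Num.sqrt (#|U|%:R * #|W|%:R).

Definition tends_to_infty (R : realType) (u : nat -> R) : Prop :=
  forall M : R, exists N : nat, forall n : nat, (N <= n)%N -> M < u n.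

(* Main.v *)
Require Import Defs.
From HB Require Import structures.
From mathcomp Require Import all_boot all_order all_algebra.
From mathcomp Require Import all_classical all_reals.
From mathcomp Require Import exp.
From mathcomp Require Import ring lra.
Import Order.TTheory GRing.Theory Num.Theory.
Lemma sum_deg_le n (e : rel 'I_n) (U : {set 'I_n}) :
  (\sum_(u in U) deg e u <= e_pairs e U U + e_pairs e U (nbhd e U))%N.
Proof.
have -> : (\sum_(u in U) deg e u = #|[set p : 'I_n * 'I_n | (p.1 \in U) && e p.1 p.2]|)%N.
  rewrite /deg.
  under eq_bigr => u _ do rewrite -sum1dep_card.
  rewrite pair_big_dep /= -sum1dep_card.
  by [].
rewrite /e_pairs; apply: leq_trans (leq_card_setU _ _).1.
apply: subset_leq_card; apply/fintype.subsetP => p; rewrite !inE => /andP[pU pe].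
rewrite pU pe /=; case: (boolP (p.2 \in U)) => //= p2U.
rewrite andbT; apply/existsP; exists p.1; by rewrite pU.
Qed.

Lemma bigmin_le (I : eqType) (s : seq I) (F : I -> nat) k x :
  x \in s -> (\big[minn/k]_(i <- s) F i <= F x)%N.
Proof.
elim: s => // a s IH; rewrite inE big_cons => /orP[/eqP->|xs].
  exact: geq_minl.
exact: leq_trans (geq_minr _ _) (IH xs).
Qed.

Local Open Scope ring_scope.

Lemma alg (R : realType) (d l n u w s : R) : 0 < l -> 20 * l <= d -> 0 < n -> 1 <= u ->
  0 <= w -> 0 <= s -> s ^+ 2 = u * w -> u <= 2 * l ^+ 2 * n / d ^+ 2 ->
  (d - l) * u <= d / n * u * u + l * u + (d / n * u * w + l * s) ->
  (d - 2 * l) ^+ 2 / (5 * l ^+ 2) * u < w.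
Proof.
move=> l0 dl n0 u1 w0 s0 hs hu hE.
have d0 : 0 < d by nra.
set t := d / n * u.
have ht : t * d <= 2 * l ^+ 2.
  rewrite /t. move: hu. rewrite ler_pdivlMr ?exprn_gt0 // => hu.
  have -> : d / n * u * d = (u * d ^+ 2) / n by rewrite expr2; field; rewrite gt_eqF.
  by rewrite ler_pdivrMr.
have t0 : 0 <= t by rewrite /t; apply: mulr_ge0 => //; [apply: divr_ge0|]; nra.
rewrite ltNge; apply/negP => hw.
have hw' : 5 * l ^+ 2 * w <= (d - 2 * l) ^+ 2 * u.
  move: hw; rewrite mulrAC ler_pdivlMr; first by rewrite mulrC.
  by rewrite mulr_gt0 // exprn_gt0.
have hls : l * s <= 45 / 100 * (d - 2 * l) * u.
  have h2 : (l * s) ^+ 2 <= (45 / 100 * (d - 2 * l) * u) ^+ 2.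
    rewrite !exprMn hs; nra.
  have hb : 0 <= 45 / 100 * (d - 2 * l) * u by nra.
  have ha : 0 <= l * s by nra.
  rewrite leNgt; apply/negP => h; nra.
have htw : t * w * d <= 2 / 5 * (d - 2 * l) ^+ 2 * u.
  have : t * d * (5 * l ^+ 2 * w) <= 2 * l ^+ 2 * ((d - 2 * l) ^+ 2 * u).
    apply: ler_pM => //; nra.
  nra.
have htu : t * u * d <= 2 * l ^+ 2 * u by nra.
have key : (d - 2 * l) * u * d <= 2 * l ^+ 2 * u + 2 / 5 * (d - 2 * l) ^+ 2 * u
              + 45 / 100 * (d - 2 * l) * u * d.
  have : (d - 2 * l) * u <= t * u + t * w + l * s by rewrite /t; nra.
  nra.
have : 15 / 100 * (d - 2 * l) * d <= 2 * l ^+ 2 + 2/5 * (d - 2 * l) * (d - (d - 2 * l)) .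
  nra.
nra.
Qed.





Lemma deg_lb (R : realType) n (e : rel 'I_n) (lam : R) (U : {set 'I_n}) :
  (0 < n)%N -> ((max_deg e)%:R - (min_deg e)%:R : R) <= lam ->
  (avg_deg R e - lam) * #|U|%:R <= (\sum_(u in U) deg e u)%N%:R.
Proof.
move=> n0 hl.
have hmin u : (min_deg e <= deg e u)%N by apply: bigmin_le; exact: mem_index_enum.
have hS : ((\sum_(v : 'I_n) deg e v) <= n * max_deg e)%N.
  apply: leq_trans (_ : (\sum_(v : 'I_n) max_deg e <= _))%N.
    by apply: leq_sum => v _; apply: leq_bigmax.
  by rewrite sum_nat_const card_ord.
have hd : avg_deg R e <= (max_deg e)%:R.
  rewrite /avg_deg ler_pdivrMr ?ltr0n // mulrC -natrM ler_nat; exact: hS.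
rewrite natr_sum -sum1_card natr_sum mulr_sumr.
apply: ler_sum => u _; rewrite mulr1.
have := hmin u; rewrite -(ler_nat R) => h; lra.
Qed.

Theorem corollary4 (R : realType) (G : forall n : nat, rel 'I_n)
  (lam : nat -> R)
  (HG : forall n, simple_graph (G n))
  (Hlam_pos : forall n, 0 < lam n)
  (Hctrl : forall n, controls (G n) (lam n))
  (H1 : forall n, ((max_deg (G n))%:R - (min_deg (G n))%:R : R) <= lam n)
  (H2 : tends_to_infty (fun n => avg_deg R (G n) / lam n / (ln (n%:R : R)) ^+ 2))
  (H3 : tends_to_infty (fun n => ln (avg_deg R (G n)) * ln (avg_deg R (G n) / lam n)
                                  / ln (n%:R : R))) :
  exists N : nat, forall n : nat, (N <= n)%N ->
    forall U : {set 'I_n},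
      (1 <= #|U|)%N ->
      (#|U|%:R : R) <= 2 * lam n ^+ 2 * n%:R / (avg_deg R (G n)) ^+ 2 ->
      (avg_deg R (G n) - 2 * lam n) ^+ 2 / (5 * lam n ^+ 2) * #|U|%:R
        < (#|nbhd (G n) U|%:R : R).
Proof.
have [N HN] := H2 (20 / (ln (2:R)) ^+ 2).
exists (maxn N 2) => n Hn U U1 hu.
have nN : (N <= n)%N by apply: leq_trans Hn; apply: leq_maxl.
have n2 : (2 <= n)%N by apply: leq_trans Hn; apply: leq_maxr.
have n0 : (0 < n)%N by apply: leq_trans n2.
have := HN n nN.
have := Hctrl n U U; have := Hctrl n U (nbhd (G n) U).
have := @sum_deg_le n (G n) U; have := @deg_lb R n (G n) (lam n) U n0 (H1 n).
have l0 := Hlam_pos n.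
move: hu.
set d := avg_deg R (G n); set l := lam n; set L := ln (n%:R : R).
move=> hu hdeg hsum hcW hcU hq.
have ln2 : 0 < ln (2 : R) by apply: ln_gt0; lra.
have hL : ln (2 : R) <= L.
  rewrite /L ler_ln ?posrE ?ltr0n //; by rewrite (ler_nat R 2 n).
have L0 : 0 < L by lra.
have dl : 20 * l <= d.
  set q := d / l / L ^+ 2 in hq.
  have e1 : d = q * L ^+ 2 * l by rewrite /q; field; rewrite ?gt_eqF.
  move: hq; rewrite ltr_pdivrMr ?exprn_gt0 // => hq.
  have : ln (2:R) ^+ 2 <= L ^+ 2 by rewrite lerXn2r ?nnegrE; lra.
  move=> hL2.
  have p2 : 0 < ln (2:R) ^+ 2 by rewrite exprn_gt0.
  have q0 : 0 < q by nra.
  have hqL : 20 < q * L ^+ 2 by nra.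
  rewrite e1; apply: ler_wpM2r; [exact: ltW | exact: ltW].
have u0 : (0 <= #|U|%:R :> R) by [].
have w0 : (0 <= #|nbhd (G n) U|%:R :> R) by [].
apply: (@alg R _ _ (n%:R) _ _ _ l0 dl _ _ w0 (sqrtr_ge0 (#|U|%:R * #|nbhd (G n) U|%:R))).
- by rewrite ltr0n.
- by rewrite ler1n.
- by rewrite sqr_sqrtr // mulr_ge0.
- by [].
have su : Num.sqrt (#|U|%:R * #|U|%:R : R) = #|U|%:R.
  by rewrite -expr2 sqrtr_sqr ger0_norm.
rewrite su in hcU.
move: hcU hcW; rewrite !ler_norml => /andP[_ hcU] /andP[_ hcW].
move: hsum; rewrite -(ler_nat R) natrD => hsum.
move: hcU hcW hsum hdeg; rewrite -/d; set a := (e_pairs _ _ _)%:R; set b := (e_pairs _ _ _)%:R.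
move=> hcU hcW hsum hdeg; rewrite -/l.
apply: le_trans hdeg _; apply: le_trans hsum _.
by apply: lerD; rewrite addrC -lerBlDr.
Qed.
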